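(* Let $f(x|\theta,\sigma,m)=\frac{2}{\sigma}\varphi\!\left(\frac{x-\theta}{\sigma}\right)\Phi\!\left(\frac{m(x-\theta)}{\sigma}\right)$ be the skew-normal density, regarded as a function of $(\theta,v,m)$ with $v=\sigma^2>0$. Then for all $x,\theta\in\mathbb{R}$, $v>0$, $m\in\mathbb{R}$: $$\frac{\partial^2 f}{\partial\theta^2}-2\frac{\partial f}{\partial v}+\frac{m^3+m}{v}\frac{\partial f}{\partial m}=0,\qquad 2m\frac{\partial f}{\partial m}+(m^2+1)\frac{\partial^2 f}{\partial m^2}+2vm\frac{\partial^2 f}{\partial v\,\partial m}=0.$$
   Context: $\varphi$ is the standard normal density and $\Phi$ the standard normal distribution function. *)

(* Defs.v *)
From Stdlib Require Import Reals Lra ClassicalEpsilon.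
Open Scope R_scope.

Definition phi (x : R) : R := exp (- (x ^ 2) / 2) / sqrt (2 * PI).

(* Riemann integral of f from a to b (oriented, as RiemannInt), if integrable;
   chosen classically (value irrelevant otherwise). *)
Definition RInt (f : R -> R) (a b : R) : R :=
  epsilon (inhabits 0)
    (fun l => exists pr : Riemann_integrable f a b, RiemannInt pr = l).

Definition Phi (x : R) : R :=
  epsilon (inhabits 0)
    (fun l => Un_cv (fun n => RInt phi (- INR n) x) l).

Definition skewn (x theta v m : R) : R :=
  2 / sqrt v * phi ((x - theta) / sqrt v) * Phi (m * (x - theta) / sqrt v).

(* Main.v *)
Require Import Defs.
From Stdlib Require Import Reals Lra ClassicalEpsilon.
From Coquelicot Require Import Coquelicot.
Open Scope R_scope.

Lemma phi_der (y : R) : is_derive phi y (- y * phi y).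
Proof.
  unfold phi. auto_derive. exact I.
  replace (- (y*(y*1)) * /2) with (- y^2/2) by field.
  field. assert (0 < 2*PI) by (generalize PI_RGT_0; lra). apply Rgt_not_eq. apply sqrt_lt_R0; lra.
Qed.

Lemma phi_cont (y:R) : continuous phi y.
Proof. apply (@ex_derive_continuous R_AbsRing R_NormedModule). eexists. apply phi_der. Qed.

Lemma phi_pos (y:R) : 0 < phi y.
Proof. unfold phi. apply Rdiv_lt_0_compat. apply exp_pos. apply sqrt_lt_R0. generalize PI_RGT_0; lra. Qed.

Lemma phi_ex a b : ex_RInt phi a b.
Proof. apply (@ex_RInt_continuous R_CompleteNormedModule). intros; apply phi_cont. Qed.

Lemma RInt_eq a b : Defs.RInt phi a b = RInt phi a b.
Proof.
  unfold Defs.RInt.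
  destruct (epsilon_spec (inhabits 0) (fun l => exists pr : Riemann_integrable phi a b, RiemannInt pr = l)) as [pr Hpr].
  - exists (RiemannInt (ex_RInt_Reals_0 _ _ _ (phi_ex a b))). eauto.
  - rewrite <- Hpr, (RInt_Reals _ _ _ pr). reflexivity.
Qed.

Lemma phi_bound y : y <= 0 -> phi y <= exp (/2) * exp y.
Proof.
  intro. unfold phi. rewrite <- exp_plus.
  assert (1 < sqrt (2*PI)). { rewrite <- sqrt_1. apply sqrt_lt_1_alt. generalize PI2_1; lra. }
  apply Rle_trans with (exp (- y ^ 2 / 2)).
  - unfold Rdiv at 1. rewrite <- (Rmult_1_r (exp _)) at 2. apply Rmult_le_compat_l. left; apply exp_pos.
    rewrite <- Rinv_1. apply Rinv_le_contravar; lra.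
  - assert (Hy: -y^2/2 <= /2 + y) by (generalize (pow2_ge_0 (y+1)); intro; field_simplify; nra).
    destruct Hy as [Hy|Hy]; [left; apply exp_increasing; auto | rewrite Hy; lra].
Qed.

Lemma seq_cv : { L | Un_cv (fun n => RInt phi (- INR n) 0) L }.
Proof.
  apply growing_cv.
  - intro n. rewrite S_INR.
    rewrite <- (@RInt_Chasles R_CompleteNormedModule phi (-(INR n + 1)) (- INR n) 0) by apply phi_ex.
    simpl. unfold plus; simpl.
    assert (0 <= RInt phi (- (INR n + 1)) (- INR n)). apply RInt_ge_0. lra. apply phi_ex. intros; left; apply phi_pos.
    lra.
  - exists (exp (/2)). intros u [n ->].
    apply Rle_trans with (RInt (fun y => exp (/2) * exp y) (- INR n) 0).
    + apply RInt_le. generalize (pos_INR n); lra. apply phi_ex.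
      apply (@ex_RInt_continuous R_CompleteNormedModule). intros. apply (@ex_derive_continuous R_AbsRing R_NormedModule). auto_derive. auto.
      intros; apply phi_bound; lra.
    + assert (H := @is_RInt_derive R_CompleteNormedModule (fun y => exp (/2) * exp y) (fun y => exp (/2) * exp y) (- INR n) 0).
      assert (H1 : forall x : R, Rmin (- INR n) 0 <= x <= Rmax (- INR n) 0 ->
        is_derive (fun y : R => exp (/ 2) * exp y) x (exp (/ 2) * exp x)).
      { intros. auto_derive. auto. ring. }
      assert (H2 : forall x : R, Rmin (- INR n) 0 <= x <= Rmax (- INR n) 0 ->
        continuous (fun y : R => exp (/ 2) * exp y) x).
      { intros. apply (@ex_derive_continuous R_AbsRing R_NormedModule). auto_derive. auto. }
      rewrite (is_RInt_unique _ _ _ _ (H H1 H2)).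
      unfold minus, plus, opp; simpl. rewrite exp_0.
      assert (0 < exp (/2) * exp (- INR n)). apply Rmult_lt_0_compat; apply exp_pos. lra.
Qed.

Lemma Phi_eq : exists L, forall x, Phi x = L + RInt phi 0 x.
Proof.
  destruct seq_cv as [L HL]. exists L. intro x.
  assert (Hx : Un_cv (fun n => Defs.RInt phi (- INR n) x) (L + RInt phi 0 x)).
  { intros e He. destruct (HL e He) as [N HN]. exists N. intros n Hn.
    rewrite RInt_eq, <- (@RInt_Chasles R_CompleteNormedModule phi _ 0 x) by apply phi_ex.
    unfold plus; simpl. specialize (HN n Hn). unfold R_dist in *.
    replace (RInt phi (- INR n) 0 + RInt phi 0 x - (L + RInt phi 0 x)) with (RInt phi (- INR n) 0 - L) by ring. auto. }
  unfold Phi.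
  eapply UL_sequence. apply (epsilon_spec (inhabits 0) (fun l => Un_cv (fun n => Defs.RInt phi (- INR n) x) l)).
  exists (L + RInt phi 0 x); exact Hx. exact Hx.
Qed.

Lemma Phi_der (y:R) : is_derive Phi y (phi y).
Proof.
  destruct Phi_eq as [L HL].
  apply is_derive_ext with (fun x => L + RInt phi 0 x). intro; auto.
  replace (phi y) with (0 + phi y) by ring.
  apply (@is_derive_plus R_AbsRing R_NormedModule). apply (@is_derive_const R_AbsRing R_NormedModule).
  apply (@is_derive_RInt R_CompleteNormedModule phi (fun x => RInt phi 0 x) 0 y).
  apply filter_forall. intro. apply RInt_correct. apply phi_ex. apply phi_cont.
Qed.

Lemma Dphi y : Derive (fun x0 => phi x0) y = - y * phi y.
Proof. apply is_derive_unique. apply phi_der. Qed.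
Lemma DPhi y : Derive (fun x0 => Phi x0) y = phi y.
Proof. apply is_derive_unique. apply Phi_der. Qed.
Lemma exphi y : ex_derive (fun x0 => phi x0) y.
Proof. eexists; apply phi_der. Qed.
Lemma exPhi y : ex_derive (fun x0 => Phi x0) y.
Proof. eexists; apply Phi_der. Qed.

Ltac sides Hv := repeat first [ split | exact I | apply exphi | apply exPhi | exact Hv | apply (Rgt_not_eq _ _ (sqrt_lt_R0 _ Hv)) | apply (Rgt_not_eq _ _ Hv) ].
Ltac fin v Hv := unfold Rminus, Rdiv; rewrite ?Dphi, ?DPhi;
  let Hs := fresh in let Hs0 := fresh in let s := fresh "s" in
  assert (Hs : sqrt v * sqrt v = v) by (apply sqrt_sqrt; left; exact Hv);
  assert (Hs0 : sqrt v <> 0) by (apply Rgt_not_eq, sqrt_lt_R0, Hv);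
  set (s := sqrt v) in *; clearbody s; try rewrite <- Hs; field; auto.

Definition A x t v := (x - t) / sqrt v.
Definition B x t v m := m * (x - t) / sqrt v.
Definition FT x t v m := 2 / (sqrt v * sqrt v) * phi (A x t v) *
  (A x t v * Phi (B x t v m) - m * phi (B x t v m)).
Definition FV x t v m := 1 / (sqrt v * v) * phi (A x t v) *
  ((A x t v * A x t v - 1) * Phi (B x t v m) - m * A x t v * phi (B x t v m)).
Definition FM x t v m := 2 / sqrt v * phi (A x t v) * phi (B x t v m) * A x t v.
Definition FTT x t v m := -2 / (sqrt v * v) * phi (A x t v) *
  ((1 - A x t v * A x t v) * Phi (B x t v m) + (2*m + m^3) * A x t v * phi (B x t v m)).
Definition FMM x t v m := - m * A x t v * A x t v * (2 / sqrt v * phi (A x t v) * phi (B x t v m) * A x t v).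
Definition FVM x t v m := (2 / sqrt v * phi (A x t v) * phi (B x t v m) * A x t v) / v
  * (-1 + (1 + m^2) * A x t v * A x t v / 2).

Ltac go v Hv := unfold skewn, FT, FM, A, B; auto_derive; [sides Hv | fin v Hv].

Lemma dT x (t:R) v m : 0 < v -> is_derive (fun t => skewn x t v m) t (FT x t v m).
Proof. intro Hv. go v Hv. Qed.
Lemma dV x (t:R) v m : 0 < v -> is_derive (fun w => skewn x t w m) v (FV x t v m).
Proof. intro Hv. unfold FV. go v Hv. Qed.
Lemma dM x (t:R) v m : 0 < v -> is_derive (fun k => skewn x t v k) m (FM x t v m).
Proof. intro Hv. go v Hv. Qed.
Lemma dTT x (t:R) v m : 0 < v -> is_derive (fun t => FT x t v m) t (FTT x t v m).
Proof. intro Hv. unfold FTT. go v Hv. Qed.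
Lemma dMM x (t:R) v m : 0 < v -> is_derive (fun k => FM x t v k) m (FMM x t v m).
Proof. intro Hv. unfold FMM. go v Hv. Qed.
Lemma dVM x (t:R) v m : 0 < v -> is_derive (fun w => FM x t w m) v (FVM x t v m).
Proof. intro Hv. unfold FVM. go v Hv. Qed.

Theorem lemmaF2 :
  exists ft fv fm ftt fmm fvm : R -> R -> R -> R -> R,
    forall x theta v m : R, 0 < v ->
      derivable_pt_lim (fun t => skewn x t v m) theta (ft x theta v m) /\
      derivable_pt_lim (fun w => skewn x theta w m) v (fv x theta v m) /\
      derivable_pt_lim (fun k => skewn x theta v k) m (fm x theta v m) /\
      derivable_pt_lim (fun t => ft x t v m) theta (ftt x theta v m) /\
      derivable_pt_lim (fun k => fm x theta v k) m (fmm x theta v m) /\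
      derivable_pt_lim (fun w => fm x theta w m) v (fvm x theta v m) /\
      ftt x theta v m - 2 * fv x theta v m
        + (m ^ 3 + m) / v * fm x theta v m = 0 /\
      2 * m * fm x theta v m + (m ^ 2 + 1) * fmm x theta v m
        + 2 * v * m * fvm x theta v m = 0.
Proof.
  exists FT, FV, FM, FTT, FMM, FVM. intros x t v m Hv.
  split. apply is_derive_Reals, dT, Hv.
  split. apply is_derive_Reals, dV, Hv.
  split. apply is_derive_Reals, dM, Hv.
  split. apply is_derive_Reals, dTT, Hv.
  split. apply is_derive_Reals, dMM, Hv.
  split. apply is_derive_Reals, dVM, Hv.
  unfold FT, FV, FM, FTT, FMM, FVM, A, B.
  assert (Hs : sqrt v * sqrt v = v) by (apply sqrt_sqrt; left; exact Hv).
  assert (Hs0 : sqrt v <> 0) by (apply Rgt_not_eq, sqrt_lt_R0, Hv).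
  set (s := sqrt v) in *. clearbody s. rewrite <- Hs.
  split; field; auto.
Qed.
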